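(* For every positive integer $\gamma$ there exists a tree $T$ with domination number $\gamma$ such that $\Gamma(T)>\frac{2}{5}\sqrt5^{\,\gamma}$.
   Context: For a graph $G$, a set $D\subseteq V(G)$ is dominating if every vertex of $G$ lies in $D$ or has a neighbour in $D$. The domination number $\gamma(G)$ is the minimum size of a dominating set; $\Gamma(G)$ denotes the number of dominating sets of $G$ of size $\gamma(G)$. *)

(* Defs.v *)
From mathcomp Require Import all_boot.
From Stdlib Require Import Reals.
Set Implicit Arguments. Unset Strict Implicit. Unset Printing Implicit Defensive.

Section Graphs.
Variable V : finType.

Definition simple_graph (e : rel V) : Prop :=
  symmetric e /\ irreflexive e.

Definition connected_graph (e : rel V) : Prop :=
  forall x y : V, connect e x y.

Definition has_cycle (e : rel V) : Prop :=
  exists (x : V) (p : seq V),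
    [/\ 2 <= size p, uniq (x :: p), path e x p & e (last x p) x].

Definition is_tree (e : rel V) : Prop :=
  [/\ 0 < #|V|, simple_graph e, connected_graph e & ~ has_cycle e].

Definition dominating (e : rel V) (D : {set V}) : bool :=
  [forall v, (v \in D) || [exists u in D, e v u]].

(* domination number: minimum size of a dominating set
   (V itself dominates, so #|V| is a valid initial value) *)
Definition domination_number (e : rel V) : nat :=
  \big[minn/#|V|]_(D : {set V} | dominating e D) #|D|.

Definition num_min_dominating (e : rel V) : nat :=
  #|[set D : {set V} | dominating e D & #|D| == domination_number e]|.
End Graphs.

(* Main.v *)
Require Import Defs.
From mathcomp Require Import all_boot zify.
From Stdlib Require Import Reals Lia Lra Psatz.
Set Implicit Arguments. Unset Strict Implicit. Unset Printing Implicit Defensive.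

Definition E (par : nat -> nat) (x y : nat) : bool :=
  ((x == par y) && (0 < y)) || ((y == par x) && (0 < x)).
Definition pe (n : nat) (par : nat -> nat) : rel 'I_n := fun x y => E par x y.
Arguments pe : clear implicits.

Section Tree.
Variables (n : nat) (par : nat -> nat).
Hypothesis hpar : forall v, 0 < v -> par v < v.

Lemma pe_sym : symmetric (pe n par).
Proof. by move=> x y; rewrite /pe /E orbC. Qed.

Lemma pe_irr : irreflexive (pe n par).
Proof.
move=> x; rewrite /pe /E orbb; apply/negP => /andP [/eqP h h0].
by have := hpar h0; rewrite -h ltnn.
Qed.

Lemma pe_small (x y : 'I_n) : pe n par x y -> (y : nat) < x -> (y : nat) = par x.
Proof.
rewrite /pe /E => /orP [/andP [/eqP h h0]|/andP [/eqP h h0]] //.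
by have := hpar h0; rewrite -h => a b; lia.
Qed.

Lemma pe_conn0 (x : 'I_n) (h0 : 0 < n) : connect (pe n par) x (Ordinal h0).
Proof.
move: {2}(nat_of_ord x) (leqnn (nat_of_ord x)) => m; elim: m x => [|m IH] x hx.
  have -> : x = Ordinal h0 by apply: ord_inj => /=; lia.
  exact: connect0.
case: (posnP (nat_of_ord x)) => hx0.
  have -> : x = Ordinal h0 by apply: ord_inj => /=; lia.
  exact: connect0.
have hp := hpar hx0.
have hpn : par x < n by apply: ltn_trans hp (ltn_ord x).
apply: (connect_trans (y := Ordinal hpn)).
  apply: connect1; rewrite /pe /E /= eqxx hx0; by rewrite orbT.
apply: IH => /=; lia.
Qed.

Lemma pe_tree (h0 : 0 < n) : is_tree (pe n par).
Proof.
split.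
- by rewrite card_ord.
- split; [exact: pe_sym | exact: pe_irr].
- move=> x y; apply: connect_trans (pe_conn0 x h0) _.
  rewrite (sym_connect_sym pe_sym); exact: pe_conn0.
- move=> [x [p [hs hu hp hl]]].
  have hc : cycle (pe n par) (x :: p) by rewrite /= rcons_path hp hl.
  have hx : x \in x :: p by rewrite inE eqxx.
  case: (arg_maxnP (fun y : 'I_n => nat_of_ord y) hx) => m hm hmax.
  case: (rot_to hm) => i q hr.
  have hc' : cycle (pe n par) (m :: q) by rewrite -hr rot_cycle.
  have hu' : uniq (m :: q) by rewrite -hr rot_uniq.
  have hsz : 2 <= size q.
    have := size_rot i (x :: p); rewrite hr /=; by case=> ->.
  have hmem : forall z, z \in m :: q -> (z : nat) <= m.
    by move=> z; rewrite -hr mem_rot => /hmax.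
  clear hr; case: q hc' hu' hsz hmem => [|u q] //= hc' hu' hsz hmem.
  case/andP: hc' => hmu hpath.
  have hw : pe n par (last u q) m.
    by move: hpath; rewrite rcons_path => /andP [].
  case/andP: hu' => hmuq huq'.
  have hlast : last u q \in u :: q by exact: mem_last.
  have hwm : last u q != m.
    by apply/eqP => e; move: hmuq; rewrite -e hlast.
  have hmu' : m != u.
    by apply/eqP => e; move: hmuq; rewrite e inE eqxx.
  have hlu : last u q != u.
    case: q hsz huq' {hpath hw hlast hwm hmem hmuq} => [|v q] //= _ /andP [huq _].
    apply/eqP => e; move: huq; rewrite -e.
    by rewrite mem_last.
  have h1 : (u : nat) < m.
    have := hmem u; rewrite !inE eqxx orbT => /(_ isT).
    rewrite leq_eqVlt => /orP [/eqP e|] //.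
    by move: hmu'; rewrite eq_sym => /eqP []; apply: ord_inj.
  have h2 : (last u q : nat) < m.
    have := hmem (last u q); rewrite inE hlast orbT => /(_ isT).
    rewrite leq_eqVlt => /orP [/eqP e|] //.
    by move: hwm => /eqP []; apply: ord_inj.
  have e1 := pe_small hmu h1.
  rewrite pe_sym in hw.
  have e2 := pe_small hw h2.
  by move: hlu => /eqP []; apply: ord_inj; rewrite e1 e2.
Qed.
End Tree.

Section Gen.
Variables (V : finType) (e : rel V).

Lemma pack (D : {set V}) (s : seq V) (L : V -> nat) :
  dominating e D -> uniq (map L s) ->
  (forall x, x \in s -> forall z, (z == x) || e x z -> L z = L x) ->
  size s <= #|D|.
Proof.
move=> /forallP hD hu hL.
pose f x := if x \in D then x else odflt x [pick u in D | e x u].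
have hf : forall x, (f x \in D) && ((f x == x) || e x (f x)).
  move=> x; rewrite /f; case: ifP => hx; first by rewrite hx eqxx.
  have := hD x; rewrite hx /= => /existsP [u /andP [hu1 hu2]].
  case: pickP => [v /andP [-> ->]|/(_ u)]; first by rewrite orbT.
  by rewrite hu1 hu2.
have hmap : map L (map f s) = map L s.
  rewrite -map_comp; apply/eq_in_map => x hx /=.
  case/andP: (hf x) => _ h; exact: (hL x hx _ h).
have hus : uniq (map f s) by apply: (@map_uniq _ _ L); rewrite hmap.
rewrite -(size_map f) cardE; apply: uniq_leq_size => // y /mapP [x _ ->].
by rewrite mem_enum; case/andP: (hf x).
Qed.

Lemma dn_eq (g0 : nat) (D0 : {set V}) :
  dominating e D0 -> #|D0| <= g0 ->
  (forall D, dominating e D -> g0 <= #|D|) -> domination_number e = g0.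
Proof.
move=> hD0 hle hlow; apply/eqP; rewrite eqn_leq; apply/andP; split.
  rewrite /domination_number; apply: leq_trans hle.
  have : D0 \in index_enum {set V} by rewrite mem_index_enum.
  elim: (index_enum {set V}) => [|a r IH] //; rewrite inE big_cons.
  case/orP => [/eqP <-|hr]; first by rewrite hD0 geq_minl.
  case: ifP => _; last exact: IH.
  exact: leq_trans (geq_minr _ _) (IH hr).
rewrite /domination_number; apply: (big_ind (fun x => g0 <= x)).
- apply: leq_trans (hlow _ hD0) _; exact: max_card.
- by move=> x y hx hy; rewrite leq_min hx hy.
- exact: hlow.
Qed.

Lemma count_ge (I : finType) (F : I -> {set V}) (g0 : nat) :
  injective F -> (forall i, dominating e (F i)) -> (forall i, #|F i| <= g0) ->
  (forall D, dominating e D -> g0 <= #|D|) ->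
  #|I| <= num_min_dominating e.
Proof.
move=> hinj hd hs hlow.
case: (pickP I) => [i0 _|h0]; last first.
  by rewrite (eq_card0 h0).
have hdn : domination_number e = g0 by apply: (dn_eq (hd i0) (hs i0) hlow).
rewrite -cardsT -(card_imset _ hinj) /num_min_dominating.
apply: subset_leq_card; apply/subsetP => D /imsetP [i _ ->].
rewrite inE hd /= hdn eqn_leq hs /=; exact: hlow.
Qed.
End Gen.

Ltac crush0 :=
  repeat (match goal with
   | |- context [if ?b then _ else _] =>
       lazymatch b with context [if _ then _ else _] => fail | _ => destruct b eqn:? end
   end);
  repeat (match goal with
   | |- is_true (_ || _) -> _ => case/orP
   | |- is_true (_ && _) -> _ => case/andP
   | |- _ -> _ => intro
   end); lia.


Section Constr.
Variables (k : nat) (t : bool).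

Definition nn := 3 + 5 * k + 7 * t.
Definition par (v : nat) : nat :=
  if v < 3 then 0 else if v < 3 + 5 * k then (if (v - 3) %% 5 == 0 then 0 else v - 1)
  else if v == 3 + 5 * k then 0 else if v < 3 + 5 * k + 4 then v - 1 else v - 2.
Definition L (v : nat) : nat :=
  if v < 3 then 0 else if v < 3 + 5 * k then
    1 + 2 * ((v - 3) %/ 5) + (if (v - 3) %% 5 < 3 then 0 else 1)
  else if v < 3 + 5 * k + 3 then 1 + 2 * k
  else if (v - 3 - 5 * k) %% 2 == 1 then 2 + 2 * k else 3 + 2 * k.

Ltac crush := rewrite /E /par /L; crush0.

Lemma hpar v : 0 < v -> par v < v.
Proof. crush. Qed.

Definition rep (c : nat) : nat :=
  if c == 0 then 1 else if c <= 2 * k then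
    (if (c - 1) %% 2 == 0 then 4 + 5 * ((c - 1) %/ 2) else 7 + 5 * ((c - 1) %/ 2))
  else if c == 2 * k + 1 then 4 + 5 * k else if c == 2 * k + 2 then 8 + 5 * k else 9 + 5 * k.

Lemma rep_lt c : c < 1 + 2 * k + 3 * t -> rep c < nn.
Proof. rewrite /nn /rep; case: t => /=; crush. Qed.

Lemma L_rep c : c < 1 + 2 * k + 3 * t -> L (rep c) = c.
Proof. rewrite /rep; case: t => /=; crush. Qed.

Lemma P0 z : z < nn -> (z == 1) || E par 1 z -> L z = 0.
Proof. rewrite /nn. crush. Qed.
Lemma P1 j z : j < k -> z < nn -> (z == 4 + 5 * j) || E par (4 + 5 * j) z -> L z = 1 + 2 * j.
Proof. rewrite /nn. crush. Qed.
Lemma P2 j z : j < k -> z < nn -> (z == 7 + 5 * j) || E par (7 + 5 * j) z -> L z = 2 + 2 * j.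
Proof. rewrite /nn. crush. Qed.
Lemma P3 z : t -> z < nn -> (z == 4 + 5 * k) || E par (4 + 5 * k) z -> L z = 1 + 2 * k.
Proof. rewrite /nn => ->. crush. Qed.
Lemma P4 z : t -> z < nn -> (z == 8 + 5 * k) || E par (8 + 5 * k) z -> L z = 2 + 2 * k.
Proof. rewrite /nn => ->. crush. Qed.
Lemma P5 z : t -> z < nn -> (z == 9 + 5 * k) || E par (9 + 5 * k) z -> L z = 3 + 2 * k.
Proof. rewrite /nn => ->. crush. Qed.

Lemma Prep c z : c < 1 + 2 * k + 3 * t -> z < nn -> (z == rep c) || E par (rep c) z -> L z = c.
Proof.
move=> hc hz; rewrite /rep.
destruct (c == 0) eqn:H0.
  have -> : c = 0 by lia.
  exact: P0 hz.
destruct (c <= 2 * k) eqn:H1.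
  destruct ((c - 1) %% 2 == 0) eqn:H2.
    move=> h; rewrite (P1 _ hz h); lia.
  move=> h; rewrite (P2 _ hz h); lia.
have ht : t by move: hc; case: (t) => //=; lia.
destruct (c == 2 * k + 1) eqn:H3.
  by move=> h; rewrite (P3 ht hz h); lia.
destruct (c == 2 * k + 2) eqn:H4.
  by move=> h; rewrite (P4 ht hz h); lia.
by move=> h; rewrite (P5 ht hz h); lia.
Qed.
End Constr.

Lemma card_ord_set n (P : nat -> bool) : #|[set x : 'I_n | P x]| = count P (iota 0 n).
Proof.
rewrite cardsE cardE /enum_mem -enumT /= size_filter.
by rewrite -val_enum_ord count_map.
Qed.

Definition T5 : seq (seq nat) := [:: [:: 1; 3]; [:: 1; 4]; [:: 2; 3]; [:: 2; 4]; [:: 0; 3]].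
Definition T7 : seq (seq nat) :=
  [:: [:: 0; 3; 4]; [:: 0; 3; 6]; [:: 0; 4; 5]; [:: 1; 3; 4]; [:: 1; 3; 6]; [:: 1; 4; 5];
      [:: 1; 5; 6]; [:: 2; 3; 4]; [:: 2; 3; 6]; [:: 2; 4; 5]; [:: 2; 5; 6]].
Definition pset5 (c i : nat) : bool := i \in nth [::] T5 c.
Definition pset7 (g i : nat) : bool := i \in nth [::] T7 g.
Definition adj5 (i i' : nat) : bool := (i == i'.-1) && (0 < i') || (i' == i.-1) && (0 < i).
Definition p7 (i : nat) : nat := if i < 4 then i.-1 else i - 2.
Definition adj7 (i i' : nat) : bool := (i == p7 i') && (0 < i') || (i' == p7 i) && (0 < i).
Definition dom5 c i := [|| pset5 c i, has (fun i' => adj5 i i' && pset5 c i') (iota 0 5) | i == 0].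
Definition dom7 g i := [|| pset7 g i, has (fun i' => adj7 i i' && pset7 g i') (iota 0 7) | i == 0].

Lemma dom5_ok c i : c < 5 -> i < 5 -> dom5 c i.
Proof. by case: c => [|[|[|[|[|c]]]]]; case: i => [|[|[|[|[|i]]]]]. Qed.
Lemma dom7_ok c i : c < 11 -> i < 7 -> dom7 c i.
Proof. by case: c => [|[|[|[|[|[|[|[|[|[|[|c]]]]]]]]]]]; case: i => [|[|[|[|[|[|[|i]]]]]]]. Qed.
Lemma cnt5 c : c < 5 -> count (pset5 c) (iota 0 5) = 2.
Proof. by case: c => [|[|[|[|[|c]]]]]. Qed.
Lemma cnt7 c : c < 11 -> count (pset7 c) (iota 0 7) = 3.
Proof. by case: c => [|[|[|[|[|[|[|[|[|[|[|c]]]]]]]]]]]. Qed.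
Lemma inj5 c c' : c < 5 -> c' < 5 -> (forall i, i < 5 -> pset5 c i = pset5 c' i) -> c = c'.
Proof.
move=> hc hc' h; move: (h 0 isT) (h 1 isT) (h 2 isT) (h 3 isT) (h 4 isT); clear h.
by case: c hc => [|[|[|[|[|c]]]]]; case: c' hc' => [|[|[|[|[|c']]]]].
Qed.
Lemma inj7 c c' : c < 11 -> c' < 11 -> (forall i, i < 7 -> pset7 c i = pset7 c' i) -> c = c'.
Proof.
move=> hc hc' h; move: (h 0 isT) (h 1 isT) (h 2 isT) (h 3 isT) (h 4 isT) (h 5 isT) (h 6 isT); clear h.
by case: c hc => [|[|[|[|[|[|[|[|[|[|[|c]]]]]]]]]]]; case: c' hc' => [|[|[|[|[|[|[|[|[|[|[|c']]]]]]]]]]].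
Qed.

Section Dom.
Variables (k : nat) (t : bool) (cj : nat -> nat) (g : nat).
Hypothesis hcj : forall j, cj j < 5.
Hypothesis hg : g < 11.

Definition inD (v : nat) : bool :=
  if v < 3 then v == 0 else if v < 3 + 5 * k then pset5 (cj ((v - 3) %/ 5)) ((v - 3) %% 5)
  else pset7 g (v - 3 - 5 * k).

Lemma inD_g j i : j < k -> i < 5 -> inD (3 + 5 * j + i) = pset5 (cj j) i.
Proof.
move=> hj hi; rewrite /inD.
have -> : (3 + 5 * j + i < 3) = false by lia.
have -> : (3 + 5 * j + i < 3 + 5 * k) = true by lia.
have -> : (3 + 5 * j + i - 3) %/ 5 = j by lia.
have -> : (3 + 5 * j + i - 3) %% 5 = i by lia.
by [].
Qed.

Lemma inD_h i : inD (3 + 5 * k + i) = pset7 g i.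
Proof.
rewrite /inD.
have -> : (3 + 5 * k + i < 3) = false by lia.
have -> : (3 + 5 * k + i < 3 + 5 * k) = false by lia.
have -> : (3 + 5 * k + i - 3 - 5 * k) = i by lia.
by [].
Qed.

Lemma Eg j i i' : j < k -> i < 5 -> i' < 5 -> adj5 i i' ->
  E (par k) (3 + 5 * j + i) (3 + 5 * j + i').
Proof. rewrite /adj5 /E /par; crush0. Qed.

Lemma Eh i i' : i < 7 -> i' < 7 -> adj7 i i' -> E (par k) (3 + 5 * k + i) (3 + 5 * k + i').
Proof. rewrite /adj7 /p7 /E /par; crush0. Qed.

Lemma E0 v : 0 < v -> (v < 3) || (3 <= v < 3 + 5 * k) && ((v - 3) %% 5 == 0) || (v == 3 + 5 * k) ->
  E (par k) v 0.
Proof. rewrite /E /par; crush0. Qed.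

Lemma decode v : v < nn k t ->
  v < 3 \/ (exists j i, [/\ j < k, i < 5 & v = 3 + 5 * j + i]) \/
  (t /\ exists i, i < 7 /\ v = 3 + 5 * k + i).
Proof.
rewrite /nn => hv.
case: (ltnP v 3) => h3; first by left.
right; case: (ltnP v (3 + 5 * k)) => h4.
  left; exists ((v - 3) %/ 5), ((v - 3) %% 5); split; lia.
right; move: hv; case: (t) => /= hv; last lia.
split => //; exists (v - 3 - 5 * k); lia.
Qed.

Definition Dset : {set 'I_(nn k t)} := [set x : 'I_(nn k t) | inD x].

Lemma Dset_dom : dominating (pe (nn k t) (par k)) Dset.
Proof.
have hn0 : 0 < nn k t by rewrite /nn; lia.
apply/forallP => x; rewrite inE.
have hwit : forall u (hu : u < nn k t), inD u -> E (par k) x u ->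
    [exists u0 in Dset, pe (nn k t) (par k) x u0].
  move=> u hu hin he; apply/existsP; exists (Ordinal hu); by rewrite inE hin.
case: (decode (ltn_ord x)) => [h3|[[j [i [hj hi hx]]]|[ht [i [hi hx]]]]].
- case: (posnP x) => hx0; first by rewrite /inD h3 hx0.
  apply/orP; right; apply: (hwit 0 hn0) => //.
  by apply: E0; rewrite // h3.
- have := dom5_ok (hcj j) hi; rewrite /dom5 => /or3P [h|h|h].
  + by rewrite hx inD_g // h.
  + case/hasP: h => i' /[!mem_iota] /andP [_ hi'] /andP [ha hp].
    apply/orP; right.
    have hu : 3 + 5 * j + i' < nn k t by rewrite /nn; lia.
    apply: (hwit _ hu); first by rewrite inD_g.
    rewrite hx; exact: Eg.
  + apply/orP; right; apply: (hwit 0 hn0) => //.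
    rewrite hx; apply: E0; first lia.
    move/eqP: h => ->; rewrite addn0.
    have -> : (3 + 5 * j - 3) %% 5 = 0 by lia.
    apply/orP; left; apply/orP; right; apply/andP; split => //; lia.
- have := dom7_ok hg hi; rewrite /dom7 => /or3P [h|h|h].
  + by rewrite hx inD_h h.
  + case/hasP: h => i' /[!mem_iota] /andP [_ hi'] /andP [ha hp].
    apply/orP; right.
    have ht1 : (t : nat) = 1 by move: ht; case: (t).
    have hu : 3 + 5 * k + i' < nn k t by rewrite /nn; lia.
    apply: (hwit _ hu); first by rewrite inD_h.
    rewrite hx; exact: Eh.
  + apply/orP; right; apply: (hwit 0 hn0) => //.
    rewrite hx; apply: E0; first lia.
    by move/eqP: h => ->; rewrite addn0 eqxx !orbT.
Qed.
End Dom.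

Section Main.
Variables (k : nat) (t : bool).

Lemma cnt_g (cj : nat -> nat) g (hcj : forall j, cj j < 5) (hg : g < 11) m : m <= k ->
  count (inD k cj g) (iota 3 (5 * m)) = 2 * m.
Proof.
elim: m => [|m IH] hm; first by [].
rewrite mulnSr iotaD count_cat (IH (ltnW hm)).
have -> : iota (3 + 5 * m) 5 = map (addn (3 + 5 * m)) (iota 0 5) by rewrite -iotaDl addn0.
rewrite count_map.
rewrite (@eq_in_count _ _ (pset5 (cj m))); last first.
  move=> i; rewrite mem_iota => /andP [_ hi] /=; apply: inD_g => //; lia.
rewrite cnt5 //; lia.
Qed.

Lemma Dset_card (cj : nat -> nat) g (hcj : forall j, cj j < 5) (hg : g < 11) :
  #|Dset k t cj g| = 1 + 2 * k + 3 * t.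
Proof.
rewrite /Dset card_ord_set /nn -addnA iotaD count_cat -addnA.
have -> : count (inD k cj g) (iota 0 3) = 1.
  by rewrite /= /inD /=.
rewrite iotaD count_cat (cnt_g hcj hg (leqnn k)).
case: (t); last by rewrite muln0 /=; lia.
have -> : iota (0 + 3 + 5 * k) (7 * true) = map (addn (3 + 5 * k)) (iota 0 7)
  by rewrite -iotaDl addn0 add0n.
rewrite count_map (@eq_in_count _ _ (pset7 g)); last by move=> i _ /=; rewrite inD_h.
rewrite cnt7 //; lia.
Qed.

Lemma lower (D : {set 'I_(nn k t)}) : dominating (pe (nn k t) (par k)) D ->
  1 + 2 * k + 3 * t <= #|D|.
Proof.
move=> hD.
have hn0 : 0 < nn k t by rewrite /nn; lia.
pose tov c : 'I_(nn k t) := insubd (Ordinal hn0) (rep k c).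
have htov : forall c, c < 1 + 2 * k + 3 * t -> (tov c : nat) = rep k c.
  by move=> c hc; rewrite /tov val_insubd rep_lt.
pose s := map tov (iota 0 (1 + 2 * k + 3 * t)).
have -> : 1 + 2 * k + 3 * t = size s by rewrite size_map size_iota.
apply: (@pack _ _ D s (fun x : 'I_(nn k t) => L k x) hD).
- rewrite /s -map_comp (_ : map _ _ = iota 0 (1 + 2 * k + 3 * t)) ?iota_uniq //.
  rewrite -[RHS]map_id; apply/eq_in_map => c; rewrite mem_iota => /andP [_ hc] /=; by rewrite htov // (L_rep hc).
- move=> x /mapP [c]; rewrite mem_iota => /andP [_ hc] -> z hz /=.
  rewrite htov // (L_rep hc) (Prep hc (ltn_ord z)) //.
  move: hz; rewrite /pe htov //.
  case/orP => [/eqP ->|->]; last by rewrite orbT.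
  by rewrite htov // eqxx.
Qed.
End Main.

Section Fin.
Variables (k : nat) (t : bool).

Local Notation Iset := (k.-tuple 'I_5 * 'I_(10 * t + 1))%type.
Definition cjof (tp : k.-tuple 'I_5) (j : nat) : nat := nth 0 (map val tp) j.

Lemma cjof_lt tp j : cjof tp j < 5.
Proof.
rewrite /cjof; case: (ltnP j k) => h.
  rewrite (nth_map (ord0 : 'I_5)) ?size_tuple //; exact: ltn_ord.
by rewrite nth_default // size_map size_tuple.
Qed.

Lemma g_lt (a : Iset) : (a.2 : nat) < 11.
Proof. have := ltn_ord a.2; have : 10 * t + 1 <= 11 by case: (t). lia. Qed.

Definition Fset (a : Iset) : {set 'I_(nn k t)} := Dset k t (cjof a.1) a.2.

Lemma Fset_inj : injective Fset.
Proof.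
move=> a b hab.
have hin : forall v (hv : v < nn k t), inD k (cjof a.1) a.2 v = inD k (cjof b.1) b.2 v.
  move=> v hv; have := congr1 (fun S : {set 'I_(nn k t)} => Ordinal hv \in S) hab.
  by rewrite /= /Fset /Dset !inE.
have hc : forall j, j < k -> cjof a.1 j = cjof b.1 j.
  move=> j hj; apply: inj5 (cjof_lt _ _) (cjof_lt _ _) _ => i hi.
  have hv : 3 + 5 * j + i < nn k t by rewrite /nn; lia.
  by rewrite -(inD_g _ (g_lt a) hj hi) -(inD_g _ (g_lt b) hj hi) hin.
have h1 : a.1 = b.1.
  apply: eq_from_tnth => i; apply: val_inj.
  have := hc i (ltn_ord i).
  by rewrite /cjof !(nth_map (ord0 : 'I_5)) ?size_tuple // -!tnth_nth.
have h2 : a.2 = b.2.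
  apply: val_inj => /=.
  have [ht|ht] : t = true \/ t = false by case: (t); auto.
    apply: inj7 (g_lt a) (g_lt b) _ => i hi.
    have hv : 3 + 5 * k + i < nn k t by rewrite /nn ht; lia.
    by rewrite -(inD_h k (cjof a.1) (g_lt a)) -(inD_h k (cjof b.1) (g_lt b)) hin.
  have h10 : (t : nat) = 0 by rewrite ht.
  have := ltn_ord a.2; have := ltn_ord b.2; lia.
by case: a b hab h1 h2 {hin hc} => [a1 a2] [b1 b2] /= _ -> ->.
Qed.

Lemma main_kt : exists n (e : rel 'I_n),
  is_tree e /\ domination_number e = 1 + 2 * k + 3 * t /\
  expn 5 k * (10 * t + 1) <= num_min_dominating e.
Proof.
have hn0 : 0 < nn k t by rewrite /nn; lia.
have hcj0 : forall j, (fun _ : nat => 0) j < 5 by [].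
exists (nn k t), (pe (nn k t) (par k)); split; first exact: pe_tree (@hpar k) hn0.
split.
  apply: (dn_eq (Dset_dom k t hcj0 (isT : 0 < 11))).
    by rewrite (Dset_card k t hcj0 (isT : 0 < 11)).
  exact: lower.
have := @count_ge _ (pe (nn k t) (par k)) Iset Fset (1 + 2 * k + 3 * t) Fset_inj.
rewrite card_prod card_tuple !card_ord; apply.
- move=> a; exact: (Dset_dom k t (cjof_lt a.1) (g_lt a)).
- move=> a; by rewrite /Fset (Dset_card k t (cjof_lt a.1) (g_lt a)).
- exact: lower.
Qed.
End Fin.

Definition par4 (v : nat) := v.-1.
Definition T4 : seq (seq nat) := [:: [:: 0; 2]; [:: 1; 2]; [:: 1; 3]].
Definition F4 (i : 'I_3) : {set 'I_4} := [set x : 'I_4 | (x : nat) \in nth [::] T4 i].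

Lemma F4_dom i : dominating (pe 4 par4) (F4 i).
Proof.
case: i => [[|[|[|i]]] hi] //; apply/forallP => -[[|[|[|[|x]]]] hx] //;
  rewrite !inE /=; try done; apply/existsP;
  first [ by exists (Ordinal (isT : 0 < 4)); rewrite !inE
        | by exists (Ordinal (isT : 1 < 4)); rewrite !inE
        | by exists (Ordinal (isT : 2 < 4)); rewrite !inE
        | by exists (Ordinal (isT : 3 < 4)); rewrite !inE ].
Qed.

Lemma F4_card i : #|F4 i| = 2.
Proof. by rewrite /F4 card_ord_set; case: i => [[|[|[|i]]] hi]. Qed.

Lemma F4_inj : injective F4.
Proof.
move=> i j h.
have h0 : (Ordinal (isT : 0 < 4) \in F4 i) = (Ordinal (isT : 0 < 4) \in F4 j) by rewrite h.
have h2 : (Ordinal (isT : 2 < 4) \in F4 i) = (Ordinal (isT : 2 < 4) \in F4 j) by rewrite h.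
move: h0 h2; rewrite !inE /=; clear h.
by case: i => [[|[|[|i]]] hi]; case: j => [[|[|[|j]]] hj] //= _ _; apply: val_inj.
Qed.

Lemma F4_low (D : {set 'I_4}) : dominating (pe 4 par4) D -> 2 <= #|D|.
Proof.
move=> hD.
have := @pack _ _ D [:: Ordinal (isT : 0 < 4); Ordinal (isT : 3 < 4)]
  (fun x : 'I_4 => (x : nat) %/ 2) hD isT; apply.
move=> x hx z; rewrite !inE in hx; have hz := ltn_ord z.
case/orP: hx => /eqP ->; rewrite /pe /E /par4 -val_eqE /=; move: hz; crush0.
Qed.


Lemma P4_main : exists n (e : rel 'I_n),
  is_tree e /\ domination_number e = 2 /\ 3 <= num_min_dominating e.
Proof.
exists 4, (pe 4 par4); split.
  apply: pe_tree => // v; rewrite /par4; lia.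
split.
  apply: (dn_eq (F4_dom ord0)); first by rewrite F4_card.
  exact: F4_low.
have := @count_ge _ (pe 4 par4) 'I_3 F4 2 F4_inj F4_dom _ F4_low.
rewrite card_ord; apply => i; by rewrite F4_card.
Qed.

Lemma INR_expn a k : INR (expn a k) = (INR a ^ k)%R.
Proof. elim: k => [|k IH] //; rewrite expnS -multE mult_INR IH /=; ring. Qed.

Lemma sqrt5_pow k : (sqrt 5 ^ (2 * k) = 5 ^ k)%R.
Proof.
rewrite -multE pow_mult.
have -> : (sqrt 5 ^ 2 = 5)%R by rewrite /= Rmult_1_r sqrt_sqrt; lra.
by [].
Qed.

Lemma leINR m n : m <= n -> (INR m <= INR n)%R.
Proof. move/leP; exact: le_INR. Qed.

Lemma sqrt5_lt : (sqrt 5 < 5 / 2)%R.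
Proof.
have h1 := sqrt_pos 5. have h2 : (sqrt 5 * sqrt 5 = 5)%R by apply: sqrt_sqrt; lra.
nra.
Qed.

Lemma pow5_pos k : (0 < 5 ^ k)%R.
Proof. apply: pow_lt; lra. Qed.

Theorem mainTheorem3 :
  forall g : nat, 0 < g ->
  exists (n : nat) (e : rel 'I_n),
    is_tree e /\ domination_number e = g /\
    (2 / 5 * sqrt 5 ^ g < INR (num_min_dominating e))%R.
Proof.
move=> g hg.
have hs := sqrt5_lt. have hs0 := sqrt_pos 5.
have [k [hk|hk]] : exists k, g = 2 * k + 1 \/ g = 2 * k + 2.
  exists ((g - 1) %/ 2); lia.
- have [n [e [ht [hd hc]]]] := main_kt k false.
  exists n, e; split => //; split; first by rewrite hd hk; lia.
  have hc1 : expn 5 k <= num_min_dominating e by move: hc; rewrite /= muln0 add0n muln1.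
  have := leINR hc1; rewrite INR_expn => hc'.
  replace (INR 5) with 5%R in hc' by (simpl; ring).
  rewrite hk pow_add sqrt5_pow /= Rmult_1_r.
  have := pow5_pos k; nra.
- case: k hk => [|k] hk.
    have [n [e [ht [hd hc]]]] := P4_main.
    exists n, e; split => //; split; first by rewrite hd hk.
    have := leINR hc; rewrite hk /= => hc'.
    have h2 : (sqrt 5 * (sqrt 5 * 1) = 5)%R by rewrite Rmult_1_r; apply: sqrt_sqrt; lra.
    rewrite h2; lra.
  have [n [e [ht [hd hc]]]] := main_kt k true.
  exists n, e; split => //; split; first by rewrite hd hk; lia.
  have hc1 : expn 5 k * 11 <= num_min_dominating e by move: hc; rewrite /= muln1.
  have := leINR hc1; rewrite -multE mult_INR INR_expn => hc'.
  replace (INR 5) with 5%R in hc' by (simpl; ring).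
  replace (INR 11) with 11%R in hc' by (simpl; ring).
  have -> : g = 2 * (k + 2) by lia.
  rewrite sqrt5_pow pow_add /=.
  have := pow5_pos k; nra.
Qed.
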